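(* Let $\mathbf{R}^{\mathrm{o}}$ be a finite set of obligations and let $\mathbf{R}=(\emptyset,\mathbf{R}^{\mathrm{o}})$ (no normality conditionals). Let the overriding relation $\triangleright$ be computed relative to $\Gamma=\emptyset$, and let entailment $\mid\sim$ range over replete $\mathbf{R}$-ordered models. Then for all Boolean formulas $a,x$: $$(\emptyset,\mathbf{R})\mid\sim \bigcirc_{\mathrm{H}}(x/a)\quad\text{iff}\quad x\in\bigcap\mathit{outf}(\mathbf{R}^{\mathrm{o}}_{\triangleright},a,\{a\}),$$ where the underlying I/O operation is $out_4^{+}$.
   Context: Boolean formulas are built from propositional letters with the classical connectives; $\models_{\mathrm{PL}}$ is classical propositional entailment, $\models_{\mathrm{S5}}$ entailment in modal logic S5; a Boolean $A$ is PL-consistent if $A\not\models_{\mathrm{PL}}\bot$. An obligation is a formula $\bigcirc(B/A)$ with $A,B$ Boolean (''$B$ ought to be the case given $A$''); its body is $b(\bigcirc(B/A))=A$ and head $h(\bigcirc(B/A))=B$. Overriding relative to a set $\Gamma$ of alethic formulas: for obligations $r_i,r_j\in\mathbf{R}^{\mathrm{o}}$, $r_j\triangleright r_i$ iff (i) $\{h(r_i),h(r_j)\}\cup\Gamma\models_{\mathrm{S5}}\bot$; (ii) $b(r_j)\models_{\mathrm{PL}}b(r_i)$ and $b(r_i)\not\models_{\mathrm{PL}}b(r_j)$; (iii) $\{h(r_i),b(r_j)\}\not\models_{\mathrm{PL}}\bot$. An $\mathbf{R}$-ordered model (here with no normality conditionals) is $M=(W,\succeq_N,\succeq_I,v)$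 with $W\neq\emptyset$, $v$ a valuation assigning to each world the set of letters true there (Boolean formulas evaluated classically), $\succeq_N=W\times W$, and $\succeq_I$ defined by $w_1\succeq_I w_2$ iff $V(w_1)\subseteq V(w_2)$, where the violation set is $V(w)=\{r_i\in\mathbf{R}^{\mathrm{o}}: w\models b(r_i)\wedge\neg h(r_i)$ and $w\not\models b(r_j)$ for every $r_j\in\mathbf{R}^{\mathrm{o}}$ with $r_j\triangleright r_i\}$. For a preorder $\succeq$ and $X\subseteq W$, $\max_{\succeq}(X)=\{w\in X:\forall u\in X\,(u\succeq w\Rightarrow w\succeq u)\}$; $\Vert A\Vert$ is the set of worlds where $A$ holds. $M$ is replete if every PL-consistent Boolean formula holds at some world of $M$. The Hanssonian operator: $w\models\bigcirc_{\mathrm{H}}(x/a)$ iff $\max_{\succeq_I}(\Vert a\Vert)\subseteq\Vert x\Vert$. For a theory $(\Gamma,\mathbf{R})$, $(\Gamma,\mathbf{R})\mid\sim\varphi$ iff for every (replete) $\mathbf{R}$-ordered model $M$ and world $w$ of $M$, if $w$ satisfies every formula in $\Gamma$ then $w\models\varphi$. I/O logic: a norm is a pair $(a,x)$ of Boolean formulas; for a set $H$ of norms, $\mathrm{m}(H)=\{a\rightarrow x:(a,x)\in H\}$, and $out_4^{+}(H,a)=\{x:\{a\}\cup\mathrm{m}(H)\models_{\mathrm{PL}}x\}$. For a set $N$ of norms, input $a$ and set $C$ of formulas, $\mathit{maxf}(N,a,C)$ is the set of $\subseteq$-maximal $H\subseteq N$ such that $out_4^{+}(H,a)\cup C$ is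 PL-consistent; $\mathit{outf}(N,a,C)=\{out_4^{+}(H,a):H\in\mathit{maxf}(N,a,C)\}$; $\bigcap\mathit{outf}(N,a,C)$ is the intersection of this family. Translation: for $r_i=\bigcirc(x/a)\in\mathbf{R}^{\mathrm{o}}$ let $D(r_i)=\{r_j\in\mathbf{R}^{\mathrm{o}}:r_j\triangleright r_i\}$ and $r_i^{\triangleright}=(a\wedge\bigwedge_{r_j\in D(r_i)}\neg b(r_j),\,x)$ if $D(r_i)\neq\emptyset$, and $r_i^{\triangleright}=(a,x)$ otherwise; $\mathbf{R}^{\mathrm{o}}_{\triangleright}=\{r^{\triangleright}:r\in\mathbf{R}^{\mathrm{o}}\}$. *)

(* Defs.v *)
From Stdlib Require Import List ClassicalEpsilon.
Import ListNotations.

Inductive form : Type :=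
| Var : nat -> form
| Top : form
| Bot : form
| Neg : form -> form
| And : form -> form -> form
| Or  : form -> form -> form
| Imp : form -> form -> form.

Definition valuation := nat -> bool.

Fixpoint eval (f : form) (v : valuation) : bool :=
  match f with
  | Var n => v n
  | Top => true
  | Bot => false
  | Neg g => negb (eval g v)
  | And g h => andb (eval g v) (eval h v)
  | Or g h => orb (eval g v) (eval h v)
  | Imp g h => orb (negb (eval g v)) (eval h v)
  end.

Definition pl_entails (S : form -> Prop) (x : form) : Prop :=
  forall v : valuation, (forall f, S f -> eval f v = true) -> eval x v = true.

Definition pl_consistent (A : form) : Prop := ~ pl_entails (fun f => f = A) Bot.

Definition pl_consistent_set (S : form -> Prop) : Prop := ~ pl_entails S Bot.

(** S5 entailment, restricted to the Boolean (modality-free) fragment, which is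
    all that is needed here since Gamma is empty and heads are Boolean: truth at
    every world of every S5 Kripke model (universal accessibility; Boolean
    formulas are evaluated locally at the world). *)
Definition s5_entails_bool (S : form -> Prop) (x : form) : Prop :=
  forall (W : Type) (val : W -> valuation) (w : W),
    (forall f, S f -> eval f (val w) = true) -> eval x (val w) = true.

(** Obligations O(B/A) are represented as pairs (A, B): body A, head B. *)
Definition obligation := (form * form)%type.
Definition body (r : obligation) : form := fst r.
Definition head (r : obligation) : form := snd r.

(** Overriding relation r_j |> r_i relative to Gamma = empty (Gamma adds no
    premises to condition (i)). *)
Definition overrides (rj ri : obligation) : Prop :=
  s5_entails_bool (fun f => f = head ri \/ f = head rj) Bot /\
  pl_entails (fun f => f = body rj) (body ri) /\
  ~ pl_entails (fun f => f = body ri) (body rj) /\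
  ~ pl_entails (fun f => f = head ri \/ f = body rj) Bot.

Definition asb (P : Prop) : bool :=
  if excluded_middle_informative P then true else false.

Definition Dset (Ro : list obligation) (ri : obligation) : list obligation :=
  filter (fun rj => asb (In rj Ro /\ overrides rj ri)) Ro.

Fixpoint bigAnd (l : list form) : form :=
  match l with
  | [] => Top
  | [f] => f
  | f :: l' => And f (bigAnd l')
  end.

Definition norm := (form * form)%type.

Definition tr (Ro : list obligation) (ri : obligation) : norm :=
  match Dset Ro ri with
  | [] => (body ri, head ri)
  | D => (And (body ri) (bigAnd (map (fun rj => Neg (body rj)) D)), head ri)
  end.

Definition Ro_tr (Ro : list obligation) : norm -> Prop :=
  fun n => exists r, In r Ro /\ n = tr Ro r.

(** A model: a nonempty set of worlds W with a valuation.  succeq_N is W x W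
    (it plays no role for the Hanssonian operator) and succeq_I is determined
    by the violation sets below. *)
Record RModel : Type := {
  world : Type;
  world_ne : inhabited world;
  vl : world -> valuation
}.

Definition holds (M : RModel) (w : world M) (A : form) : Prop :=
  eval A (vl M w) = true.

Definition viol (Ro : list obligation) (M : RModel) (w : world M)
  (ri : obligation) : Prop :=
  In ri Ro /\ holds M w (body ri) /\ ~ holds M w (head ri) /\
  (forall rj, In rj Ro -> overrides rj ri -> ~ holds M w (body rj)).

Definition geI (Ro : list obligation) (M : RModel) (w1 w2 : world M) : Prop :=
  forall r, viol Ro M w1 r -> viol Ro M w2 r.

Definition succeqN (M : RModel) (w1 w2 : world M) : Prop := True.

Definition maxr {W : Type} (ge : W -> W -> Prop) (X : W -> Prop) : W -> Prop :=
  fun w => X w /\ forall u, X u -> ge u w -> ge w u.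

Definition truthset (M : RModel) (A : form) : world M -> Prop :=
  fun w => holds M w A.

Definition hansson (Ro : list obligation) (M : RModel) (w : world M)
  (x a : form) : Prop :=
  forall u, maxr (geI Ro M) (truthset M a) u -> truthset M x u.

Definition replete (M : RModel) : Prop :=
  forall A : form, pl_consistent A -> exists w : world M, holds M w A.

(** (empty, R) |~ O_H(x/a), over replete R-ordered models (Gamma is empty, so
    every world satisfies Gamma). *)
Definition entails_H (Ro : list obligation) (x a : form) : Prop :=
  forall M : RModel, replete M -> forall w : world M, hansson Ro M w x a.

Definition out4p (H : norm -> Prop) (a : form) : form -> Prop :=
  fun x => pl_entails (fun f => f = a \/ exists n, H n /\ f = Imp (fst n) (snd n)) x.

Definition subsetN (H1 H2 : norm -> Prop) : Prop := forall n, H1 n -> H2 n.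

Definition io_cons (H : norm -> Prop) (a : form) (C : form -> Prop) : Prop :=
  pl_consistent_set (fun f => out4p H a f \/ C f).

Definition maxf (N : norm -> Prop) (a : form) (C : form -> Prop)
  (H : norm -> Prop) : Prop :=
  subsetN H N /\ io_cons H a C /\
  (forall H', subsetN H H' -> subsetN H' N -> io_cons H' a C -> subsetN H' H).

Definition cap_outf (N : norm -> Prop) (a : form) (C : form -> Prop)
  (x : form) : Prop :=
  forall H, maxf N a C H -> out4p H a x.

(* Main.v *)
Require Import Defs.
From Stdlib Require Import List.
From Stdlib Require Import Classical Lia Bool ClassicalEpsilon.
From Stdlib Require Import List.
Import ListNotations.

Definition violv (Ro : list obligation) (v : valuation) (ri : obligation) : Prop :=
  In ri Ro /\ eval (body ri) v = true /\ ~ eval (Defs.head ri) v = true /\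
  (forall rj, In rj Ro -> overrides rj ri -> ~ eval (body rj) v = true).

Definition sat (v : valuation) (n : norm) : Prop :=
  eval (Imp (fst n) (snd n)) v = true.

Definition Good (Ro : list obligation) (a : form) (v : valuation) : Prop :=
  eval a v = true /\
  forall u, eval a u = true -> (forall r, violv Ro u r -> violv Ro v r) ->
    (forall r, violv Ro v r -> violv Ro u r).

Definition P (Ro : list obligation) (a x : form) : Prop :=
  forall v, Good Ro a v -> eval x v = true.

Fixpoint bnd (f : form) : nat :=
  match f with
  | Var n => S n
  | Top | Bot => 0
  | Neg g => bnd g
  | And g h | Or g h | Imp g h => Nat.max (bnd g) (bnd h)
  end.

Lemma eval_agree f v v' K : bnd f <= K -> (forall n, n < K -> v n = v' n) ->
  eval f v = eval f v'.
Proof.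
  induction f; simpl; intros Hb Ha; try reflexivity.
  - apply Ha; lia.
  - rewrite IHf; auto.
  - rewrite IHf1, IHf2; auto; lia.
  - rewrite IHf1, IHf2; auto; lia.
  - rewrite IHf1, IHf2; auto; lia.
Qed.

Definition bndRo (Ro : list obligation) : nat :=
  fold_right (fun r acc => Nat.max (Nat.max (bnd (body r)) (bnd (Defs.head r))) acc) 0 Ro.

Lemma bndRo_in Ro r : In r Ro -> bnd (body r) <= bndRo Ro /\ bnd (Defs.head r) <= bndRo Ro.
Proof.
  induction Ro; simpl; intros H; [contradiction|].
  destruct H as [<-|H]; [lia|]. specialize (IHRo H). lia.
Qed.

Lemma violv_agree Ro v v' r : (forall n, n < bndRo Ro -> v n = v' n) ->
  violv Ro v r -> violv Ro v' r.
Proof.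
  intros Ha [Hi [Hb [Hh Ho]]].
  assert (E : forall r0, In r0 Ro -> eval (body r0) v = eval (body r0) v' /\
                                   eval (Defs.head r0) v = eval (Defs.head r0) v').
  { intros r0 Hr0. destruct (bndRo_in Ro r0 Hr0).
    split; apply eval_agree with (K := bndRo Ro); auto. }
  destruct (E r Hi) as [E1 E2].
  split; [auto|]. split; [congruence|]. split; [congruence|].
  intros rj Hj Hov. destruct (E rj Hj) as [E3 _]. rewrite <- E3. auto.
Qed.

Fixpoint lits (u : valuation) (k : nat) : form :=
  match k with
  | 0 => Top
  | S k => And (lits u k) (if u k then Var k else Neg (Var k))
  end.

Lemma lits_spec u k v : eval (lits u k) v = true <-> forall n, n < k -> v n = u n.
Proof.
  induction k; simpl.
  - split; intros; [lia|reflexivity].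
  - rewrite andb_true_iff, IHk. split.
    + intros [H1 H2] n Hn. destruct (PeanoNat.Nat.eq_dec n k) as [->|Hne].
      * destruct (u k); simpl in H2; [auto|]. destruct (v k); simpl in *; congruence.
      * apply H1; lia.
    + intros H. split; [intros; apply H; lia|].
      destruct (u k) eqn:E; simpl; rewrite (H k ltac:(lia)), E; reflexivity.
Qed.

Definition Mc : RModel := {| world := valuation; world_ne := inhabits (fun _ => true); vl := fun v => v |}.

Lemma partA Ro a x : entails_H Ro x a <-> P Ro a x.
Proof.
  split.
  - intros HE v [Ha Hg].
    assert (Hr : replete Mc).
    { intros A HA. apply NNPP. intros Hn. apply HA. intros v' Hv'.
      exfalso. apply Hn. exists v'. apply Hv'. reflexivity. }
    apply (HE Mc Hr v v). split; [exact Ha|].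
    intros u Hu Hge. exact (Hg u Hu Hge).
  - intros HP M Hr w u [Hau Hmax]. apply HP. split; [exact Hau|].
    intros u' Ha' Hsub.
    set (K := Nat.max (bnd a) (bndRo Ro)).
    destruct (Hr (lits u' K)) as [w'' Hw''].
    { intros Hc. specialize (Hc u'). simpl in Hc. discriminate Hc.
      intros f ->. apply lits_spec. auto. }
    unfold holds in Hw''. rewrite lits_spec in Hw''.
    assert (Ag : forall n, n < bndRo Ro -> vl M w'' n = u' n).
    { intros; apply Hw''; unfold K; lia. }
    assert (Ag' : forall n, n < bndRo Ro -> u' n = vl M w'' n).
    { intros; symmetry; auto. }
    assert (Haw : truthset M a w'').
    { unfold truthset, holds. rewrite (eval_agree a _ u' K); auto. unfold K; lia. }
    intros r Hr0. 
    apply (violv_agree Ro (vl M w'')); [exact Ag|].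
    apply (Hmax w'' Haw).
    intros r' Hr'. apply Hsub. apply (violv_agree Ro (vl M w'')); auto.
    exact Hr0.
Qed.

Lemma bigAnd_spec l v : eval (bigAnd l) v = true <-> forall f, In f l -> eval f v = true.
Proof.
  induction l as [|f l IH]; simpl.
  - split; intros; [contradiction|reflexivity].
  - destruct l as [|g l'].
    + split; [intros H f' [<-|[]]; auto|intros H; apply H; auto].
    + change (eval (And f (bigAnd (g :: l'))) v = true <->
              (forall f0, f = f0 \/ In f0 (g :: l') -> eval f0 v = true)).
      simpl eval. rewrite andb_true_iff.
      fold (bigAnd (g :: l')). rewrite IH. split.
      * intros [H1 H2] f0 [<-|H]; auto.
      * intros H; split; auto.
Qed.

Lemma asb_spec (Q : Prop) : asb Q = true <-> Q.
Proof.
  unfold asb. destruct (ClassicalEpsilon.excluded_middle_informative Q); split; auto; discriminate.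
Qed.

Lemma Dset_spec Ro r rj : In rj (Dset Ro r) <-> In rj Ro /\ overrides rj r.
Proof.
  unfold Dset. rewrite filter_In, asb_spec. tauto.
Qed.

Lemma tr_sat Ro r v : In r Ro -> (sat v (tr Ro r) <-> ~ violv Ro v r).
Proof.
  intros Hr. unfold sat, tr, violv.
  assert (HD := Dset_spec Ro r).
  destruct (Dset Ro r) as [|d l] eqn:ED; simpl.
  - rewrite orb_true_iff, negb_true_iff.
    split.
    + intros H [_ [Hb [Hh _]]]. destruct H; congruence.
    + intros H. destruct (eval (body r) v) eqn:Eb; [|auto].
      destruct (eval (Defs.head r) v) eqn:Eh; [auto|].
      exfalso. apply H. repeat split; auto.
      intros rj Hj Hov. exfalso. apply (proj2 (HD rj)); auto.
  - rewrite orb_true_iff, negb_true_iff.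
    change (eval (bigAnd (map (fun rj => Neg (body rj)) (d :: l))) v) with
      (eval (bigAnd (map (fun rj => Neg (body rj)) (d :: l))) v).
    rewrite andb_false_iff.
    assert (EB : eval (bigAnd (map (fun rj => Neg (body rj)) (d :: l))) v = true <->
                 forall rj, In rj (d :: l) -> eval (body rj) v = false).
    { rewrite bigAnd_spec. split.
      - intros H rj Hj. specialize (H (Neg (body rj))). cbn [eval] in H.
        rewrite <- negb_true_iff. apply H. apply in_map_iff. eauto.
      - intros H f Hf. apply in_map_iff in Hf. destruct Hf as [rj [<- Hj]].
        simpl. rewrite H; auto. }
    split.
    + intros H [_ [Hb [Hh Ho]]]. destruct H as [[H|H]|H]; try congruence.
      rewrite <- not_true_iff_false in H. apply H. apply EB.
      intros rj Hj. apply not_true_iff_false. apply Ho; apply HD; auto.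
    + intros H. destruct (eval (body r) v) eqn:Eb; [|auto].
      destruct (eval (Defs.head r) v) eqn:Eh; [auto|].
      left. right. apply not_true_iff_false. intros HB.
      apply H. repeat split; auto.
      intros rj Hj Hov. rewrite (proj1 EB HB rj); [discriminate|]. apply HD; auto.
Qed.

Lemma io_cons_of_val H a v : eval a v = true -> (forall n, H n -> sat v n) ->
  io_cons H a (fun f => f = a).
Proof.
  intros Ha Hs Hc. specialize (Hc v). simpl in Hc. discriminate Hc.
  intros f [Hf| ->]; [|exact Ha].
  apply Hf. intros f0 [->|[n [Hn ->]]]; [exact Ha|]. apply Hs; auto.
Qed.

Lemma val_of_io_cons H a : io_cons H a (fun f => f = a) ->
  exists u, eval a u = true /\ forall n, H n -> sat u n.
Proof.
  intros Hc. apply NNPP. intros Hn. apply Hc. intros v Hv. exfalso. apply Hn.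
  exists v. split.
  - apply Hv. auto.
  - intros n Hn0. apply Hv. left. intros v' Hv'. apply Hv'. right. eauto.
Qed.

Lemma partB Ro a x : cap_outf (Ro_tr Ro) a (fun f => f = a) x <-> P Ro a x.
Proof.
  split.
  - intros HC v [Ha Hg].
    set (H := fun n => Ro_tr Ro n /\ sat v n).
    assert (HM : maxf (Ro_tr Ro) a (fun f => f = a) H).
    { split; [intros n [Hn _]; exact Hn|]. split.
      - apply io_cons_of_val with v; auto. intros n [_ Hs]; exact Hs.
      - intros H' HH' HN' Hc'. destruct (val_of_io_cons H' a Hc') as [u [Hau Hsu]].
        assert (Hsub : forall r, violv Ro u r -> violv Ro v r).
        { intros r Hr. apply NNPP. intros Hn.
          assert (Hin : In r Ro) by (destruct Hr; auto).
          apply (proj1 (tr_sat Ro r u Hin)); [|exact Hr].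
          apply Hsu. apply HH'. split; [exists r; auto|].
          apply (tr_sat Ro r v Hin). exact Hn. }
        intros n Hn. split; [apply HN'; auto|].
        destruct (HN' n Hn) as [r [Hr ->]].
        apply (tr_sat Ro r v Hr). intros Hv. apply (proj1 (tr_sat Ro r u Hr)).
        + apply Hsu; auto.
        + apply (Hg u Hau Hsub); auto. }
    specialize (HC H HM). apply HC. intros f [->|[n [[_ Hs] ->]]]; auto.
  - intros HP H [HN [Hc Hmax]] u Hu. apply HP. split; [apply Hu; auto|].
    intros u' Ha' Hsub.
    assert (HH : forall n, H n -> sat u n).
    { intros n Hn. apply Hu. right. eauto. }
    set (H2 := fun n => Ro_tr Ro n /\ sat u' n).
    assert (Hs2 : forall n, H n -> H2 n).
    { intros n Hn. split; [auto|]. destruct (HN n Hn) as [r [Hr ->]].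
      apply (tr_sat Ro r u' Hr). intros Hv. apply (proj1 (tr_sat Ro r u Hr)).
      - apply HH; auto.
      - apply Hsub; auto. }
    assert (Hc2 : io_cons H2 a (fun f => f = a)).
    { apply io_cons_of_val with u'; auto. intros n [_ Hs]; exact Hs. }
    specialize (Hmax H2 Hs2 (fun n Hn => proj1 Hn) Hc2).
    intros r Hr. apply NNPP. intros Hn.
    assert (Hin : In r Ro) by (destruct Hr; auto).
    apply (proj1 (tr_sat Ro r u Hin)); [|exact Hr].
    apply HH. apply Hmax. split; [exists r; auto|].
    apply (tr_sat Ro r u' Hin). exact Hn.
Qed.

Theorem theorem3 (Ro : list obligation) (a x : form) :
  entails_H Ro x a <-> cap_outf (Ro_tr Ro) a (fun f => f = a) x.
Proof.
  rewrite partA, partB. tauto.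
Qed.
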